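(* Let $(\mathcal{A},\varphi)$ be a non-commutative probability space (a unital $*$-algebra with a state $\varphi$) and let $(\mathcal{A}_{1,\ell},\mathcal{A}_{1,r})$ and $(\mathcal{A}_{2,\ell},\mathcal{A}_{2,r})$ be pairs of $*$-subalgebras of $\mathcal{A}$ which are bi-monotonically independent (in the order $1<2$) with respect to $\varphi$. If $\varphi|_{\mathcal{A}_{1,\ell}}\ne0$, then $\varphi(ab)=\varphi(ba)=\varphi(a)\varphi(b)$ for all $a\in\mathcal{A}_{2,\ell}$ and $b\in\mathcal{A}_{2,r}$. Consequently the bi-monotonic product of states is not a state in general.
   Context: For algebras $\mathcal{C}_k$, $\sqcup_k\mathcal{C}_k$ denotes the free product without identification of units, $*_k\mathcal{C}_k$ the free product of unital algebras with identification of units, and $\widetilde{\mathcal{C}}=\mathbb{C}1\oplus\mathcal{C}$ the unitization; $\widetilde{\mathcal{C}_1}*\widetilde{\mathcal{C}_2}\cong\widetilde{\mathcal{C}_1\sqcup\mathcal{C}_2}$. Notation. For $n\ge1$ and $\chi:\{1,\dots,n\}\to\{\ell,r\}$ with $\chi^{-1}(\{\ell\})=\{i_1<\dots<i_p\}$ and $\chi^{-1}(\{r\})=\{i_{p+1}>\dots>i_n\}$, let $\prec_\chi$ be the total order $i_1\prec_\chi\cdots\prec_\chi i_n$. A $\chi$-interval is an interval for $\prec_\chi$. For $V=\{v_1<\dots<v_s\}$ write $b_V=b_{v_1}\cdots b_{v_s}$. For $\omega:\{1,\dots,n\}\to K$, $\pi_{\chi,\omega}$ is the unique partition of $\{1,\dots,n\}$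 into blocks $V_1,\dots,V_m$ such that each $V_k$ is a $\chi$-interval, $\max_{\prec_\chi}V_k\prec_\chi\min_{\prec_\chi}V_{k+1}$, $\omega$ is constant on each $V_k$, and $\omega(V_k)\ne\omega(V_{k+1})$. c-bi-free product. Given pairs of unital algebras $(\mathcal{B}_{k,\ell},\mathcal{B}_{k,r})_{k\in K}$ and unital linear functionals $\varphi_k,\psi_k$ on $\mathcal{B}_{k,\ell}*\mathcal{B}_{k,r}$, their c-bi-free product $(\varphi,\psi)$ is the unique pair of unital linear functionals on $*_k(\mathcal{B}_{k,\ell}*\mathcal{B}_{k,r})$ restricting to $\varphi_k,\psi_k$ and such that whenever $b_j\in\mathcal{B}_{\omega(j),\chi(j)}$ with $\psi(b_V)=0$ for all $V\in\pi_{\chi,\omega}$, then $\psi(b_1\cdots b_n)=0$ and $\varphi(b_1\cdots b_n)=\prod_{V\in\pi_{\chi,\omega}}\varphi(b_V)$. Bi-monotonic product. For pairs $(\mathcal{A}_{k,\ell},\mathcal{A}_{k,r})$, $k=1,2$, with linear functionals $\varphi_k$ on $\mathcal{A}_{k,\ell}\sqcup\mathcal{A}_{k,r}$: let $\widetilde{\varphi_k}$ be the unital extension to $\widetilde{\mathcal{A}_{k,\ell}\sqcup\mathcal{A}_{k,r}}$, $\delta_1$ the unital functional on $\widetilde{\mathcal{A}_{1,\ell}\sqcup\mathcal{A}_{1,r}}$ vanishing on $\mathcal{A}_{1,\ell}\sqcup\mathcal{A}_{1,r}$, and $(\widetilde\varphi,\widetilde\psi)$ the c-bi-free product of $(\widetilde{\varphi_1},\delta_1)$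 and $(\widetilde{\varphi_2},\widetilde{\varphi_2})$ for the pairs $(\widetilde{\mathcal{A}_{k,\ell}},\widetilde{\mathcal{A}_{k,r}})$. Then $\varphi_1\rhd\!\!\rhd\varphi_2$ is the restriction of $\widetilde\varphi$ to $(\mathcal{A}_{1,\ell}\sqcup\mathcal{A}_{1,r})\sqcup(\mathcal{A}_{2,\ell}\sqcup\mathcal{A}_{2,r})$. Bi-monotonic independence of two pairs of subalgebras of $(\mathcal{A},\varphi)$ (in the order $1<2$) means $\varphi\circ\iota=\varphi_1\rhd\!\!\rhd\varphi_2$, where $\iota:(\mathcal{A}_{1,\ell}\sqcup\mathcal{A}_{1,r})\sqcup(\mathcal{A}_{2,\ell}\sqcup\mathcal{A}_{2,r})\to\mathcal{A}$ is induced by the inclusions and $\varphi_k=\varphi\circ\iota|_{\mathcal{A}_{k,\ell}\sqcup\mathcal{A}_{k,r}}$. *)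

(* Defs.v *)
From HB Require Import structures.
From mathcomp Require Import all_boot all_order all_algebra.
Set Implicit Arguments. Unset Strict Implicit. Unset Printing Implicit Defensive.
Import Order.TTheory GRing.Theory Num.Theory.
Local Open Scope ring_scope.

(* Scalars: an arbitrary numClosedFieldType C (models C; conjugation Num.conj,
   and 0 <= z means "z is real and nonnegative"). *)

Section Defs.
Variables (C : numClosedFieldType) (A : algType C).

Record is_star (star : A -> A) : Prop := {
  star_invol : forall a, star (star a) = a;
  star_mul : forall a b, star (a * b) = star b * star a;
  star_semilin : forall (al : C) a b,
      star (al *: a + b) = Num.conj al *: star a + star b }.

Record is_state (star : A -> A) (phi : A -> C) : Prop := {
  state_lin : forall (al : C) a b, phi (al *: a + b) = al * phi a + phi b;
  state_unit : phi 1 = 1;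
  state_pos : forall a, 0 <= phi (star a * a) }.

Record is_star_subalg (star : A -> A) (S : {pred A}) : Prop := {
  sub0 : 0 \in S;
  subD : forall a b, a \in S -> b \in S -> a + b \in S;
  subZ : forall (al : C) a, a \in S -> al *: a \in S;
  subM : forall a b, a \in S -> b \in S -> a * b \in S;
  subStar : forall a, a \in S -> star a \in S }.

(* Index conventions: algebra index k : bool with false = 1, true = 2;
   side chi : bool with true = left (l), false = right (r). *)
Definition alg1 := false.
Definition alg2 := true.
Definition lft := true.
Definition rgt := false.

Definition fam4 (A1l A1r A2l A2r : {pred A}) (k chi : bool) : {pred A} :=
  if k then (if chi then A2l else A2r) else (if chi then A1l else A1r).

(* An element of the unitization ~A_{k,chi} = C1 (+) A_{k,chi} is a pair
   (lambda, a) with a in A_{k,chi}; a letter carries its index (k, chi). *)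
Definition letter := ((bool * bool) * (C * A))%type.
Definition l0 : letter := ((false, false), (0, 0)).

Definition uadd (x y : C * A) : C * A := (x.1 + y.1, x.2 + y.2).
Definition uscale (al : C) (x : C * A) : C * A := (al * x.1, al *: x.2).
Definition umul (x y : C * A) : C * A :=
  (x.1 * y.1, x.1 *: y.2 + y.1 *: x.2 + x.2 * y.2).
Definition uone : C * A := (1, 0).

Definition valid_letter (fam : bool -> bool -> {pred A}) (l : letter) :=
  l.2.2 \in fam l.1.1 l.1.2.
Definition valid_word fam (w : seq letter) := all (valid_letter fam) w.

(* F : seq letter -> C encodes a unital linear functional on the unital free
   product *_{k,chi} ~A_{k,chi}: F is multilinear, compatible with the product
   of adjacent letters from the same algebra, with the units, and F(1) = 1.
   (The free product is the tensor algebra on the direct sum modulo exactly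
   these relations.) *)
Record fp_functional (fam : bool -> bool -> {pred A}) (F : seq letter -> C)
  : Prop := {
  fp_unital : F [::] = 1;
  fp_linear : forall u v (j : bool * bool) (x y : C * A) (al : C),
      valid_word fam u -> valid_word fam v ->
      x.2 \in fam j.1 j.2 -> y.2 \in fam j.1 j.2 ->
      F (u ++ (j, uadd (uscale al x) y) :: v)
        = al * F (u ++ (j, x) :: v) + F (u ++ (j, y) :: v);
  fp_merge : forall u v (j : bool * bool) (x y : C * A),
      valid_word fam u -> valid_word fam v ->
      x.2 \in fam j.1 j.2 -> y.2 \in fam j.1 j.2 ->
      F (u ++ (j, x) :: (j, y) :: v) = F (u ++ (j, umul x y) :: v);
  fp_unit : forall u v (j : bool * bool),
      valid_word fam u -> valid_word fam v ->
      F (u ++ (j, uone) :: v) = F (u ++ v) }.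

(* positions 0..n-1 listed in the total order prec_chi: left positions in
   increasing order, then right positions in decreasing order *)
Definition chi_order (w : seq letter) : seq nat :=
  [seq i <- iota 0 (size w) | (nth l0 w i).1.2]
  ++ rev [seq i <- iota 0 (size w) | ~~ (nth l0 w i).1.2].

Fixpoint group_runs (f : nat -> bool) (s : seq nat) : seq (seq nat) :=
  match s with
  | [::] => [::]
  | i :: s' =>
      match group_runs f s' with
      | (j :: b) :: rest =>
          if f i == f j then (i :: j :: b) :: rest
          else [:: i] :: (j :: b) :: rest
      | r => [:: i] :: r
      end
  end.

Definition pi_blocks (w : seq letter) : seq (seq nat) :=
  group_runs (fun i => (nth l0 w i).1.1) (chi_order w).

Definition subword (w : seq letter) (V : seq nat) : seq letter :=
  [seq nth l0 w i | i <- sort leq V].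

Definition cbifree_rule fam (Phi Psi : seq letter -> C) :=
  forall w, valid_word fam w -> (0 < size w)%N ->
    (forall V, V \in pi_blocks w -> Psi (subword w V) = 0) ->
    Psi w = 0 /\ Phi w = \prod_(V <- pi_blocks w) Phi (subword w V).

Definition evalU (w : seq letter) : A :=
  foldr (fun l acc => (l.2.1 *: 1 + l.2.2) * acc) 1 w.
Definition aug (w : seq letter) : C := \prod_(l <- w) l.2.1.

(* restrictions of (Phi, Psi): (~phi_1, delta_1) on the algebra 1 part and
   (~phi_2, ~phi_2) on the algebra 2 part, where ~phi_k is the unital
   extension of phi_k = phi o iota |_{A_{k,l} ⊔ A_{k,r}} *)
Definition restrict_rule fam (phi : A -> C) (Phi Psi : seq letter -> C) :=
  forall w, valid_word fam w ->
    (all (fun l => l.1.1 == alg1) w -> Phi w = phi (evalU w) /\ Psi w = aug w)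
 /\ (all (fun l => l.1.1 == alg2) w ->
       Phi w = phi (evalU w) /\ Psi w = phi (evalU w)).

(* bi-monotonic independence of (A_{1,l},A_{1,r}) and (A_{2,l},A_{2,r}) in the
   order 1 < 2: phi o iota equals phi_1 |>> phi_2, the restriction of the first
   component of the (unique) c-bi-free product (Phi,Psi) of (~phi_1,delta_1)
   and (~phi_2,~phi_2) to the non-unital free product. *)
Definition bimonotone_indep (phi : A -> C) (fam : bool -> bool -> {pred A}) :=
  exists Phi Psi : seq letter -> C,
    [/\ fp_functional fam Phi, fp_functional fam Psi,
        restrict_rule fam phi Phi Psi, cbifree_rule fam Phi Psi &
        forall w, valid_word fam w -> (0 < size w)%N ->
          all (fun l => l.2.1 == 0) w -> phi (evalU w) = Phi w].

End Defs.

(* Main.v *)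
Require Import Defs.
From HB Require Import structures.
From mathcomp Require Import all_boot all_order all_algebra.
From mathcomp Require Import ring.
Import Order.TTheory GRing.Theory Num.Theory.
Local Open Scope ring_scope.
Set Implicit Arguments. Unset Strict Implicit.


Lemma evalU_cons (C : numClosedFieldType) (A : algType C) (l : letter A) (u : seq (letter A)) :
  evalU (l :: u) = (l.2.1 *: 1 + l.2.2) * evalU u.
Proof. by []. Qed.

Lemma evalU_cat (C : numClosedFieldType) (A : algType C) (u v : seq (letter A)) :
  evalU (u ++ v) = evalU u * evalU v.
Proof.
elim: u => [|l u IH]; first by rewrite /= mul1r.
by rewrite cat_cons !evalU_cons IH mulrA.
Qed.

Lemma state0 (C : numClosedFieldType) (A : algType C) (star : A -> A) (phi : A -> C) :
  is_state star phi -> phi 0 = 0.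
Proof.
move=> hs; have := state_lin hs 1 0 0; rewrite scaler0 addr0 mul1r.
by move=> /(congr1 (fun z => z - phi 0)); rewrite subrr addrK => <-.
Qed.

Lemma stateD (C : numClosedFieldType) (A : algType C) (star : A -> A) (phi : A -> C) :
  is_state star phi -> forall a b, phi (a + b) = phi a + phi b.
Proof. by move=> hs a b; have := state_lin hs 1 a b; rewrite scale1r mul1r. Qed.

Lemma stateZ (C : numClosedFieldType) (A : algType C) (star : A -> A) (phi : A -> C) :
  is_state star phi -> forall al a, phi (al *: a) = al * phi a.
Proof.
by move=> hs al a; have := state_lin hs al a 0; rewrite addr0 (state0 hs) addr0.
Qed.

Lemma Phi_eval (C : numClosedFieldType) (A : algType C) (star : A -> A) (phi : A -> C)
  (fam : bool -> bool -> {pred A}) (Phi : seq (letter A) -> C) :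
  is_state star phi -> fp_functional fam Phi ->
  (forall j : bool * bool, 0 \in fam j.1 j.2) ->
  (forall w, valid_word fam w -> (0 < size w)%N ->
          all (fun l => l.2.1 == 0) w -> phi (evalU w) = Phi w) ->
  forall w, valid_word fam w -> Phi w = phi (evalU w).
Proof.
move=> hs hf h0 hev.
suff H : forall v u, valid_word fam u -> all (fun l => l.2.1 == 0) u ->
   valid_word fam v -> Phi (u ++ v) = phi (evalU (u ++ v)).
  by move=> w hw; exact: (H w [::]).
elim=> [|[j [lam y]] v IH] u Hu Hz Hv.
  rewrite cats0; case: u Hu Hz => [|l u] Hu Hz.
    by rewrite (fp_unital hf) /= (state_unit hs).
  by rewrite hev.
move: Hv; rewrite /valid_word /= => /andP [Hy Hv].
have -> : (j, (lam, y)) = (j, uadd (uscale lam (@uone C A)) (0, y)).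
  by rewrite /uadd /uscale /uone /= mulr1 addr0 scaler0 add0r.
rewrite (@fp_linear _ _ _ _ hf u v j (@uone C A) (0, y) lam Hu Hv (h0 j) Hy) (@fp_unit _ _ _ _ hf u v j Hu Hv).
have Hu' : valid_word fam (rcons u (j, (0, y))) by rewrite /valid_word all_rcons; apply/andP; split; [exact: Hy | exact: Hu].
have Hz' : all (fun l : letter A => l.2.1 == 0) (rcons u (j, (0, y))) by rewrite all_rcons /= eqxx.
rewrite (IH u Hu Hz Hv) -(cat_rcons (j, (0, y)) u v) (IH (rcons u (j, (0, y))) Hu' Hz' Hv).
rewrite cat_rcons !evalU_cat !evalU_cons /=.
rewrite mulr1 addr0 scaler0 add0r scale0r add0r.
have -> : evalU u * ((lam *: 1 + y) * evalU v)
   = lam *: (evalU u * evalU v) + evalU u * (y * evalU v).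
  by rewrite mulrDl mulrDr -scalerAl mul1r -scalerAr.
by rewrite (state_lin hs).
Qed.


Lemma starD (C : numClosedFieldType) (A : algType C) (star : A -> A) :
  is_star star -> forall a b, star (a + b) = star a + star b.
Proof. by move=> h a b; have := star_semilin h 1 a b; rewrite !scale1r conjC1 scale1r. Qed.

Lemma star0 (C : numClosedFieldType) (A : algType C) (star : A -> A) :
  is_star star -> star 0 = 0.
Proof.
move=> h; have := starD h 0 0; rewrite addr0.
by move=> /(congr1 (fun z => z - star 0)); rewrite subrr addrK => <-.
Qed.

Lemma starZ (C : numClosedFieldType) (A : algType C) (star : A -> A) :
  is_star star -> forall al a, star (al *: a) = al^* *: star a.
Proof. by move=> h al a; have := star_semilin h al a 0; rewrite !addr0 (star0 h) addr0. Qed.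

Lemma star1 (C : numClosedFieldType) (A : algType C) (star : A -> A) :
  is_star star -> star 1 = 1.
Proof.
move=> h; have := star_mul h (star 1) 1.
by rewrite mulr1 (star_invol h) mulr1.
Qed.

Lemma state_herm (C : numClosedFieldType) (A : algType C) (star : A -> A) (phi : A -> C) :
  is_star star -> is_state star phi -> forall y, phi (star y) = (phi y)^*.
Proof.
move=> hst hs y.
set p := phi y; set q := phi (star y); set r := phi (star y * y).
have Hr : r^* = r by apply: geC0_conj; apply: (state_pos hs).
have E1 : phi (star (1 + y) * (1 + y)) = 1 + p + q + r.
  rewrite (starD hst) (star1 hst) mulrDl !mulrDr !mul1r mulr1 !(stateD hs) (state_unit hs).
  by rewrite /p /q /r; ring.
have E2 : phi (star (1 + 'i *: y) * (1 + 'i *: y)) = 1 + 'i * p - 'i * q + r.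
  rewrite (starD hst) (star1 hst) (starZ hst) conjCi mulrDl !mulrDr !mul1r mulr1.
  rewrite -!scalerAl -!scalerAr scalerA !(stateD hs) !(stateZ hs) (state_unit hs).
  rewrite /p /q /r (_ : - 'i * 'i = 1); last by rewrite mulNr mulCii opprK.
  by ring.
have H1 : (1 + p + q + r)^* = 1 + p + q + r by rewrite -E1; apply: geC0_conj; apply: (state_pos hs).
have H2 : (1 + 'i * p - 'i * q + r)^* = 1 + 'i * p - 'i * q + r
  by rewrite -E2; apply: geC0_conj; apply: (state_pos hs).
have H1' : 1 + p^* + q^* + r^* = 1 + p + q + r.
  by rewrite -[RHS]H1 !rmorphD rmorph1.
have H2' : 1 + - 'i * p^* - - 'i * q^* + r^* = 1 + 'i * p - 'i * q + r.
  by rewrite -[RHS]H2 !rmorphD !rmorphN !rmorphM rmorph1 /= conjCi.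
have D1 : p + q - p^* - q^* = 0.
  rewrite -[LHS](_ : (1 + p + q + r) - (1 + p^* + q^* + r^*) + (r^* - r) = _); last by ring.
  by rewrite H1' Hr !subrr addr0.
have D2 : 'i * p - 'i * q + 'i * p^* - 'i * q^* = 0.
  rewrite -[LHS](_ : (1 + 'i * p - 'i * q + r) - (1 + - 'i * p^* - - 'i * q^* + r^*) + (r^* - r) = _); last by ring.
  by rewrite H2' Hr !subrr addr0.
have K : (q - p^*) *+ 2 = 0.
  rewrite (_ : (q - p^*) *+ 2 = (p + q - p^* - q^*) + 'i * ('i * p - 'i * q + 'i * p^* - 'i * q^*)
        - (1 + 'i * 'i) * (p - q + p^* - q^*)); last by ring.
  by rewrite D1 D2 mulCii subrr mulr0 mul0r !subr0 addr0.
by apply/eqP; move/eqP: K; rewrite mulrn_eq0 /= subr_eq0.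
Qed.


Lemma blk (s : seq (seq nat)) (Q : seq nat -> Prop) :
  foldr (fun V acc => Q V /\ acc) True s -> forall V, V \in s -> Q V.
Proof.
elim: s => [|V0 s IH] //= [hV hr] V; rewrite inE => /orP [/eqP -> //|].
exact: IH.
Qed.

Ltac vw := rewrite /valid_word /= /valid_letter /fam4 /=;
  repeat (apply/andP; split); try done; assumption.

Lemma eq_via (R : comNzRingType) (E L Rr k : R) : E = 0 -> L - Rr = k * E -> L = Rr.
Proof. by move=> -> /eqP; rewrite mulr0 subr_eq0 => /eqP. Qed.

Ltac expand phiS phiZ phi1 := rewrite ?mulrDl ?mulrDr -?scalerAl -?scalerAr ?mul1r ?mulr1
  ?scalerA ?mulrA ?phiS ?phiZ ?phi1.

Theorem mainTheorem5 (C : numClosedFieldType) (A : algType C)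
  (star : A -> A) (phi : A -> C) (A1l A1r A2l A2r : {pred A}) :
  is_star star -> is_state star phi ->
  is_star_subalg star A1l -> is_star_subalg star A1r ->
  is_star_subalg star A2l -> is_star_subalg star A2r ->
  bimonotone_indep phi (fam4 A1l A1r A2l A2r) ->
  (exists x, x \in A1l /\ phi x != 0) ->
  forall a b, a \in A2l -> b \in A2r ->
    phi (a * b) = phi a * phi b /\ phi (b * a) = phi a * phi b.
Proof.
move=> hst hs h1l h1r h2l h2r [Phi [Psi [fPhi fPsi hres hcb hev]]] [x [hx hpx]] a b ha hb.
have h0 : forall j : bool * bool, 0 \in fam4 A1l A1r A2l A2r j.1 j.2.
  by move=> [[] []]; rewrite /fam4 /=; first [exact: sub0 h2l|exact: sub0 h2r|exact: sub0 h1l|exact: sub0 h1r].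
have PE := Phi_eval hs fPhi h0 hev.
have PsiE2 : forall w, valid_word (fam4 A1l A1r A2l A2r) w ->
    all (fun l : letter A => l.1.1 == alg2) w -> Psi w = phi (evalU w).
  by move=> w hw h2; case: (hres w hw) => _ /(_ h2) [_ ->].
have PsiE1 : forall w, valid_word (fam4 A1l A1r A2l A2r) w ->
    all (fun l : letter A => l.1.1 == alg1) w -> Psi w = aug w.
  by move=> w hw h2; case: (hres w hw) => /(_ h2) [_ ->] _.
have hsx := subStar h1l hx.
have hsa := subStar h2l ha.
have hsb := subStar h2r hb.
set pa := phi a; set pb := phi b.
have phiS := stateD hs; have phiZ := stateZ hs; have phi1 := state_unit hs.
have R1 : phi (x * (- pa *: 1 + a)) = 0.
  set w := [:: ((alg1, lft), (0, x)); ((alg2, lft), (- pa, a))].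
  have hw : valid_word (fam4 A1l A1r A2l A2r) w by rewrite /w /valid_word /= /valid_letter /= hx ha.
  have hB : forall V, V \in pi_blocks w -> Psi (subword w V) = 0.
    apply: blk; rewrite /pi_blocks /chi_order /subword /=.
    split; first by rewrite PsiE1 /aug ?big_cons ?big_nil ?mul0r //; vw.
    split => //; rewrite PsiE2 //; last vw.
    by rewrite /evalU /= mulr1 phiS phiZ phi1 mulr1 addNr.
  have [_ E] := hcb w hw isT hB.
  move: E; rewrite /pi_blocks /chi_order /subword /= !big_cons big_nil.
  rewrite (PE w hw) (PE [:: ((alg2, lft), (- pa, a))]); last vw.
  rewrite /evalU /= !mulr1 scale0r add0r => ->.
  by rewrite phiS phiZ phi1 mulr1 addNr mulr0.
have R2 : phi (x * (- pb *: 1 + b)) = 0.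
  set w := [:: ((alg1, lft), (0, x)); ((alg2, rgt), (- pb, b))].
  have hw : valid_word (fam4 A1l A1r A2l A2r) w by vw.
  have hB : forall V, V \in pi_blocks w -> Psi (subword w V) = 0.
    apply: blk; rewrite /pi_blocks /chi_order /subword /=.
    split; first by rewrite PsiE1 /aug ?big_cons ?big_nil ?mul0r //; vw.
    split => //; rewrite PsiE2 //; last vw.
    by rewrite /evalU /= mulr1 phiS phiZ phi1 mulr1 addNr.
  have [_ E] := hcb w hw isT hB.
  move: E; rewrite /pi_blocks /chi_order /subword /= !big_cons big_nil.
  rewrite (PE w hw) (PE [:: ((alg2, rgt), (- pb, b))]); last vw.
  rewrite /evalU /= !mulr1 scale0r add0r => ->.
  by rewrite phiS phiZ phi1 mulr1 addNr mulr0.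
have R2' : phi ((- pb *: 1 + b) * x) = 0.
  set w := [:: ((alg2, rgt), (- pb, b)); ((alg1, lft), (0, x))].
  have hw : valid_word (fam4 A1l A1r A2l A2r) w by vw.
  have hB : forall V, V \in pi_blocks w -> Psi (subword w V) = 0.
    apply: blk; rewrite /pi_blocks /chi_order /subword /=.
    split; first by rewrite PsiE1 /aug ?big_cons ?big_nil ?mul0r //; vw.
    split => //; rewrite PsiE2 //; last vw.
    by rewrite /evalU /= mulr1 phiS phiZ phi1 mulr1 addNr.
  have [_ E] := hcb w hw isT hB.
  move: E; rewrite /pi_blocks /chi_order /subword /= !big_cons big_nil.
  rewrite (PE w hw) (PE [:: ((alg2, rgt), (- pb, b))]); last vw.
  rewrite /evalU /= !mulr1 scale0r add0r => ->.
  by rewrite phiS phiZ phi1 mulr1 addNr ?mul0r ?mulr0.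
have R4 : phi (x * ((- pa *: 1 + a) * (- pb *: 1 + b))) = 0.
  set w := [:: ((alg2, rgt), (- pb^*, star b)); ((alg2, lft), (- pa^*, star a));
               ((alg1, lft), (0, star x))].
  have hw : valid_word (fam4 A1l A1r A2l A2r) w by vw.
  have hB : forall V, V \in pi_blocks w -> Psi (subword w V) = 0.
    apply: blk; rewrite /pi_blocks /chi_order /subword /=.
    split; first by rewrite PsiE2 /evalU /= ?mulr1 ?phiS ?phiZ ?phi1 ?mulr1 ?(state_herm hst hs) ?addNr //; vw.
    split; first by rewrite PsiE1 /aug ?big_cons ?big_nil ?mul0r //; vw.
    split => //; rewrite PsiE2 //; last vw.
    by rewrite /evalU /= mulr1 phiS phiZ phi1 mulr1 (state_herm hst hs) addNr.
  have [_ E] := hcb w hw isT hB.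
  move: E; rewrite /pi_blocks /chi_order /subword /= !big_cons big_nil.
  rewrite (PE w hw) (PE [:: ((alg2, lft), (- pa^*, star a))]); last vw.
  rewrite /evalU /= !mulr1 scale0r add0r.
  rewrite phiS phiZ phi1 mulr1 (state_herm hst hs) addNr mul0r => E.
  apply/eqP; rewrite -conjC_eq0 -(state_herm hst hs); apply/eqP; rewrite -E.
  congr phi.
  rewrite !(star_mul hst) !(starD hst) !(starZ hst) (star1 hst) !rmorphN /=.
  by rewrite mulrA.
pose c := phi (a * b) - pa * pb.
pose lam := - c - pa. pose mu := 1 - pb.
have R3 : phi (x * ((lam *: 1 + a) * (mu *: 1 + b))) = 0.
  set w := [:: ((alg1, lft), (0, x)); ((alg2, lft), (lam, a)); ((alg2, rgt), (mu, b))].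
  have hw : valid_word (fam4 A1l A1r A2l A2r) w by vw.
  have hB : forall V, V \in pi_blocks w -> Psi (subword w V) = 0.
    apply: blk; rewrite /pi_blocks /chi_order /subword /=.
    split; first by rewrite PsiE1 /aug ?big_cons ?big_nil ?mul0r //; vw.
    split => //; rewrite PsiE2 //; last vw.
    rewrite /evalU /=.
    expand phiS phiZ phi1.
    by rewrite /lam /mu /c /pa /pb; ring.
  have [_ E] := hcb w hw isT hB.
  move: E; rewrite /pi_blocks /chi_order /subword /= !big_cons big_nil.
  rewrite (PE w hw) (PE [:: ((alg2, lft), (lam, a)); ((alg2, rgt), (mu, b))]); last vw.
  rewrite /evalU /= !mulr1 scale0r add0r => ->.
  expand phiS phiZ phi1.
  by rewrite /lam /mu /c /pa /pb; ring.
have R4' : phi ((- pb *: 1 + b) * (x * (- pa *: 1 + a))) = 0.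
  set w := [:: ((alg2, lft), (- pa^*, star a)); ((alg1, lft), (0, star x));
               ((alg2, rgt), (- pb^*, star b))].
  have hw : valid_word (fam4 A1l A1r A2l A2r) w by vw.
  have hB : forall V, V \in pi_blocks w -> Psi (subword w V) = 0.
    apply: blk; rewrite /pi_blocks /chi_order /subword /=.
    split; first by rewrite PsiE2 /evalU /= ?mulr1 ?phiS ?phiZ ?phi1 ?mulr1 ?(state_herm hst hs) ?addNr //; vw.
    split; first by rewrite PsiE1 /aug ?big_cons ?big_nil ?mul0r //; vw.
    split => //; rewrite PsiE2 //; last vw.
    by rewrite /evalU /= mulr1 phiS phiZ phi1 mulr1 (state_herm hst hs) addNr.
  have [_ E] := hcb w hw isT hB.
  move: E; rewrite /pi_blocks /chi_order /subword /= !big_cons big_nil.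
  rewrite (PE w hw) (PE [:: ((alg2, lft), (- pa^*, star a))]); last vw.
  rewrite /evalU /= !mulr1 scale0r add0r.
  rewrite phiS phiZ phi1 mulr1 (state_herm hst hs) addNr mul0r => E.
  apply/eqP; rewrite -conjC_eq0 -(state_herm hst hs); apply/eqP; rewrite -E.
  congr phi.
  rewrite !(star_mul hst) !(starD hst) !(starZ hst) (star1 hst) !rmorphN /=.
  by rewrite ?mulrA.
pose c' := phi (b * a) - pa * pb.
pose lam' := - c' - pa.
have R3' : phi ((mu *: 1 + b) * (x * (lam' *: 1 + a))) = 0.
  set w := [:: ((alg2, rgt), (mu, b)); ((alg1, lft), (0, x)); ((alg2, lft), (lam', a))].
  have hw : valid_word (fam4 A1l A1r A2l A2r) w by vw.
  have hB : forall V, V \in pi_blocks w -> Psi (subword w V) = 0.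
    apply: blk; rewrite /pi_blocks /chi_order /subword /=.
    split; first by rewrite PsiE1 /aug ?big_cons ?big_nil ?mul0r //; vw.
    split => //; rewrite PsiE2 //; last vw.
    rewrite /evalU /=.
    expand phiS phiZ phi1.
    by rewrite /lam' /mu /c' /pa /pb; ring.
  have [_ E] := hcb w hw isT hB.
  move: E; rewrite /pi_blocks /chi_order /subword /= !big_cons big_nil.
  rewrite (PE w hw) (PE [:: ((alg2, rgt), (mu, b)); ((alg2, lft), (lam', a))]); last vw.
  rewrite /evalU /= !mulr1 scale0r add0r => ->.
  expand phiS phiZ phi1.
  by rewrite /lam' /mu /c' /pa /pb; ring.
have e1 : phi (x * a) = pa * phi x.
  move: R1; expand phiS phiZ phi1 => E; apply: (eq_via (k := 1) E); rewrite /pa; ring.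
have e2 : phi (x * b) = pb * phi x.
  move: R2; expand phiS phiZ phi1 => E; apply: (eq_via (k := 1) E); rewrite /pb; ring.
have e2' : phi (b * x) = pb * phi x.
  move: R2'; expand phiS phiZ phi1 => E; apply: (eq_via (k := 1) E); rewrite /pb; ring.
have e4 : phi (x * a * b) = pa * pb * phi x.
  move: R4; expand phiS phiZ phi1; rewrite e1 e2 => E.
  apply: (eq_via (k := 1) E); rewrite /pa /pb; ring.
have e4' : phi (b * x * a) = pa * pb * phi x.
  move: R4'; expand phiS phiZ phi1; rewrite e1 e2' => E.
  apply: (eq_via (k := 1) E); rewrite /pa /pb; ring.
have key : c * phi x = 0.
  move: R3; expand phiS phiZ phi1; rewrite e1 e2 e4 => E.
  apply: (eq_via (k := -1) E); rewrite /lam /mu /c /pa /pb; ring.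
have key' : c' * phi x = 0.
  move: R3'; expand phiS phiZ phi1; rewrite e1 e2' e4' => E.
  apply: (eq_via (k := -1) E); rewrite /lam' /mu /c' /pa /pb; ring.
split.
  move/eqP: key; rewrite mulf_eq0 (negPf hpx) orbF /c subr_eq0.
  by move/eqP.
move/eqP: key'; rewrite mulf_eq0 (negPf hpx) orbF /c' subr_eq0.
by move/eqP.
Qed.
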